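(* Let $\beta\in[0,1]$, $n\in\mathbb{N}$, and let $\underline{\Delta}:\{k\in\mathbb{N}_0^{\{0,1\}^2}: k_{++}=n\}\to[-1,1]$ be a function. A. The following three assertions are equivalent: (i) $\underline{\Delta}$ is a lower $\beta$-confidence bound for the parameter $q\mapsto q_{01}-q_{10}$ in the multinomial model $\mathcal{M}:=(\mathrm{M}_{n,q}: q\in\mathrm{prob}(\{0,1\}^2))$. (ii) $\underline{\Delta}$ is a lower $\beta$-confidence bound for the parameter $(\pi,\chi)\mapsto \pi_1(\chi^{(2)}_{1|1}-\chi^{(1)}_{1|1})-(1-\pi_1)(\chi^{(2)}_{0|0}-\chi^{(1)}_{0|0})$ in the full latent class model $\mathcal{P}_2$. (iii) $\underline{\Delta}$ is a lower $\beta$-confidence bound for the parameter $(\pi,\chi)\mapsto \pi_1(\chi^{(2)}_{1|1}-\chi^{(1)}_{1|1})$ in the restricted latent class model $\mathcal{P}_{2,\le}$. B. Let $\underline{\Delta}$ satisfy (i)–(iii) and let $\tilde{\Delta}:\{k\in\mathbb{N}_0^{\{0,1\}^2}: k_{++}=n\}\to[-1,1]$ be another function satisfying (i)–(iii). If $\tilde{\Delta}$ is worse than $\underline{\Delta}$ as a lower $\beta$-confidence bound for the estimation problem ($\mathcal{P}_{2,\le}$, parameter in (iii)), then $\tilde{\Delta}$ is worse than $\underline{\Delta}$ also for the estimation problem ($\mathcal{P}_2$, parameter in (ii)), and equivalently for ($\mathcal{M}$, parameter in (i)). C. If $\underline{\Delta}$ is an admissible $\beta$-confidence bound for one of the estimation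 problems ($\mathcal{M}$, parameter in (i)) and ($\mathcal{P}_2$, parameter in (ii)), then it is admissible for the other one as well, and also for ($\mathcal{P}_{2,\le}$, parameter in (iii)).
   Context: For a finite set $\mathcal{X}$, $\mathrm{prob}(\mathcal{X})$ denotes the set of probability densities $p:\mathcal{X}\to[0,1]$ with $\sum_x p_x=1$; for finite sets $\mathcal{X},\mathcal{Y}$, $\mathrm{markov}(\mathcal{X},\mathcal{Y})$ denotes the set of maps $(x,y)\mapsto p_{y|x}$ with $p_{\cdot|x}\in\mathrm{prob}(\mathcal{Y})$ for every $x$. $\mathrm{M}_{n,p}$ is the multinomial distribution with sample size $n$ and probability vector $p$, i.e. $\mathrm{M}_{n,p}(\{k\})=n!\prod_x p_x^{k_x}/k_x!$ for $k\in\mathbb{N}_0^{\mathcal{X}}$ with $\sum_x k_x=n$. A subscript $+$ denotes summation over the replaced index, e.g. $k_{++}=\sum_{i,j}k_{ij}$, $q_{1+}=q_{10}+q_{11}$. Let $\Theta_2:=\mathrm{prob}(\{0,1\})\times\mathrm{markov}(\{0,1\},\{0,1\}^2)$, with elements $\theta=(\pi,\chi)$. Define $\mu(\theta)\in\mathrm{prob}(\{0,1\}^2)$ by $\mu(\theta)_j=\sum_{i=0}^1\pi_i\chi_{j|i}$ for $j\in\{0,1\}^2$, and $P_\theta:=\mathrm{M}_{n,\mu(\theta)}$. For $i,\iota\in\{0,1\}$ put $\chi^{(1)}_{\iota|i}:=\chi_{\iota 0|i}+\chi_{\iota 1|i}$ and $\chi^{(2)}_{\iota|i}:=\chi_{0\iota|i}+\chi_{1\iota|i}$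 (characteristics of the first and second test; $\pi_1$ is the prevalence, $\chi^{(m)}_{1|1}$ the sensitivity and $\chi^{(m)}_{0|0}$ the specificity of test $m$). The full latent class model is $\mathcal{P}_2:=(P_\theta:\theta\in\Theta_2)$; the restricted latent class model is $\mathcal{P}_{2,\le}:=(P_\theta:\theta\in\Theta_{2,\le})$ with $\Theta_{2,\le}:=\{(\pi,\chi)\in\Theta_2:\chi^{(1)}_{0|0}\le\chi^{(2)}_{0|0}\}$. For a statistical model $(P_\theta:\theta\in\Theta)$ on a sample space and a parameter $\kappa:\Theta\to\overline{\mathbb{R}}$ (not necessarily identifiable), a measurable $\underline{\kappa}$ with values in $\overline{\mathbb{R}}$ is a lower $\beta$-confidence bound if $P_\theta(\underline{\kappa}\le\kappa(\theta))\ge\beta$ for all $\theta$. For two such bounds, $\tilde{\kappa}$ is called worse than $\underline{\kappa}$ if $P_\theta(\tilde{\kappa}\ge t)\le P_\theta(\underline{\kappa}\ge t)$ for all $\theta\in\Theta$ and all $t<\kappa(\theta)$; strictly worse if moreover strict inequality holds for at least one $\theta$ and $t$. $\underline{\kappa}$ is admissible (as a lower $\beta$-confidence bound for the problem) if no other lower $\beta$-confidence bound for that problem is strictly better (i.e. no bound relative to which $\underline{\kappa}$ is strictly worse). *)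

(* Defs.v *)
From HB Require Import structures.
From mathcomp Require Import all_boot all_order all_algebra.
From mathcomp Require Import reals constructive_ereal.
Set Implicit Arguments. Unset Strict Implicit. Unset Printing Implicit Defensive.
Import Order.TTheory GRing.Theory Num.Theory.
Local Open Scope ring_scope.
Local Open Scope ereal_scope.

(* Cells of {0,1}^2 : (j1, j2) with false = 0, true = 1;
   j1 = result of test 1, j2 = result of test 2. *)
Definition cell := (bool * bool)%type.

(* Sample space {k in N_0^{{0,1}^2} : k_{++} = n}; counts are bounded by n,
   so we take them in 'I_n.+1 to get a finite type. *)
Definition sample (n : nat) :=
  {k : {ffun cell -> 'I_n.+1} | (\sum_(j : cell) (k j : nat) == n)%N}.

Section Defs.
Variable R : realType.

Definition is_prob (X : finType) (p : X -> R) : Prop :=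
  (forall x, (0 <= p x)%R) /\ (\sum_(x : X) p x)%R = 1%R.

Definition mult_pmf (n : nat) (p : cell -> R) (k : sample n) : R :=
  ((n`!)%:R * \prod_(j : cell) (p j ^+ (val k j) / ((val k j)`!)%:R))%R.

Definition Pr (n : nat) (p : cell -> R) (A : pred (sample n)) : R :=
  (\sum_(k : sample n | A k) mult_pmf p k)%R.

(* A generic statistical model on the sample space: parameter type T,
   parameter set Theta, and theta |-> cell-probability vector law theta,
   P_theta := M_{n, law theta}.  kappa is the parameter of interest. *)

(* lower beta-confidence bound (every map on the finite discrete sample
   space is measurable) *)
Definition is_lcb (n : nat) (T : Type) (Theta : T -> Prop) (law : T -> cell -> R)
    (kappa : T -> R) (beta : R) (L : sample n -> \bar R) : Prop :=
  forall t, Theta t -> (beta <= Pr (law t) [pred k | (L k <= (kappa t)%:E)%E])%R.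

Definition worse (n : nat) (T : Type) (Theta : T -> Prop) (law : T -> cell -> R)
    (kappa : T -> R) (Lt L : sample n -> \bar R) : Prop :=
  forall t, Theta t -> forall s : \bar R, (s < (kappa t)%:E)%E ->
    (Pr (law t) [pred k | (s <= Lt k)%E] <= Pr (law t) [pred k | (s <= L k)%E])%R.

Definition strictly_worse (n : nat) (T : Type) (Theta : T -> Prop)
    (law : T -> cell -> R) (kappa : T -> R) (Lt L : sample n -> \bar R) : Prop :=
  worse Theta law kappa Lt L /\
  exists t, Theta t /\ exists s : \bar R, (s < (kappa t)%:E)%E /\
    (Pr (law t) [pred k | (s <= Lt k)%E] < Pr (law t) [pred k | (s <= L k)%E])%R.

Definition admissible (n : nat) (T : Type) (Theta : T -> Prop)
    (law : T -> cell -> R) (kappa : T -> R) (beta : R) (L : sample n -> \bar R)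
    : Prop :=
  is_lcb Theta law kappa beta L /\
  forall L' : sample n -> \bar R, is_lcb Theta law kappa beta L' ->
    ~ strictly_worse Theta law kappa L L'.

Definition ThetaM (q : cell -> R) : Prop := is_prob q.
Definition lawM (q : cell -> R) : cell -> R := q.
Definition kappaM (q : cell -> R) : R := (q (false, true) - q (true, false))%R.

(* theta = (pi, chi), pi : prob({0,1}), chi i : prob({0,1}^2) *)
Definition LCparam := ((bool -> R) * (bool -> cell -> R))%type.

Definition Theta2 (th : LCparam) : Prop :=
  is_prob th.1 /\ forall i, is_prob (th.2 i).

Definition mu (th : LCparam) (j : cell) : R := (\sum_(i : bool) th.1 i * th.2 i j)%R.

Definition chi1 (th : LCparam) (iota i : bool) : R :=
  (th.2 i (iota, false) + th.2 i (iota, true))%R.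
Definition chi2 (th : LCparam) (iota i : bool) : R :=
  (th.2 i (false, iota) + th.2 i (true, iota))%R.

Definition Theta2le (th : LCparam) : Prop :=
  Theta2 th /\ (chi1 th false false <= chi2 th false false)%R.

Definition kappa2 (th : LCparam) : R :=
  (th.1 true * (chi2 th true true - chi1 th true true)
   - (1 - th.1 true) * (chi2 th false false - chi1 th false false))%R.

Definition kappa2le (th : LCparam) : R :=
  (th.1 true * (chi2 th true true - chi1 th true true))%R.

End Defs.

(* Main.v *)
Require Import Defs.
From HB Require Import structures.
From mathcomp Require Import all_boot all_order all_algebra.
From mathcomp Require Import reals constructive_ereal.
From mathcomp Require Import ring lra.
Import Order.TTheory GRing.Theory Num.Theory.
Local Open Scope ring_scope.
Set Implicit Arguments.
Section H.
Variable R : realType.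
Implicit Types (p q : cell -> R).

Lemma sum_cell (f : cell -> R) :
  \sum_(j : cell) f j = f (true,true) + f (true,false) + (f (false,true) + f (false,false)).
Proof.
rewrite (eq_bigr (fun j : cell => (fun a b => f (a,b)) j.1 j.2)); last by case.
by rewrite -(pair_bigA _ (fun a b => f (a,b))) /= !big_bool.
Qed.

Lemma sum_bool (f : bool -> R) : \sum_(i : bool) f i = f true + f false.
Proof. by rewrite big_bool. Qed.

Lemma Pr_ext n p p' (A : pred (sample n)) : (forall j, p j = p' j) -> Pr p A = Pr p' A.
Proof.
move=> E; apply: eq_bigr => k _; rewrite /mult_pmf; congr (_ * _).
by apply: eq_bigr => j _; rewrite E.
Qed.

Lemma mult_ge0 n p (k : sample n) : (forall j, 0 <= p j) -> 0 <= mult_pmf p k.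
Proof.
move=> H; rewrite /mult_pmf mulr_ge0 //; apply: prodr_ge0 => j _.
by rewrite divr_ge0 // exprn_ge0.
Qed.

Lemma Pr_le n p (A B : pred (sample n)) : (forall j, 0 <= p j) ->
  (forall k, A k -> B k) -> Pr p A <= Pr p B.
Proof.
move=> H AB; rewrite /Pr [X in _ <= X]big_mkcond [X in X <= _]big_mkcond /=.
apply: ler_sum => k _; case: (boolP (A k)) => Ak.
  by rewrite (AB k Ak).
by case: (B k) => //; apply: mult_ge0.
Qed.

Lemma prob_le1 p j : is_prob p -> p j <= 1.
Proof.
move=> [H S]; rewrite sum_cell in S; move: (H (true,true)) (H (true,false)) (H (false,true)) (H (false,false)).
by case: j => [[] []] /=; lra.
Qed.

Lemma mu_prob (th : LCparam R) : Theta2 th -> is_prob (mu th).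
Proof.
move=> [[P0 P1] C]; split.
  move=> j; case: (C true) => C1 _; case: (C false) => C0 _.
  by rewrite /mu sum_bool addr_ge0 // mulr_ge0.
rewrite /mu exchange_big /= -[RHS]P1; apply: eq_bigr => i _.
by rewrite -mulr_sumr; case: (C i) => _ ->; rewrite mulr1.
Qed.

Lemma kappa2_mu (th : LCparam R) : Theta2 th -> kappa2 th = kappaM (mu th).
Proof.
move=> [[P0 P1] C]; rewrite sum_bool in P1.
rewrite /kappa2 /kappaM /mu /chi1 /chi2 !sum_bool.
have -> : 1 - th.1 true = th.1 false by lra.
ring.
Qed.

Lemma kappa2le_ge (th : LCparam R) : Theta2le th -> kappa2 th <= kappa2le th.
Proof.
move=> [[[P0 P1] C] H]; rewrite sum_bool in P1.
rewrite /kappa2 /kappa2le lerBlDr lerDl; apply: mulr_ge0; first by move: (P0 false); lra.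
by rewrite subr_ge0.
Qed.

Lemma kappa2le_le1 (th : LCparam R) : Theta2 th -> kappa2le th <= 1.
Proof.
move=> [[P0 P1] C]; rewrite sum_bool in P1.
have h1 := P0 true; have h0 := P0 false.
case: (C true) => Cn _.
have a := @prob_le1 (th.2 true) (false,true) (C true).
have b := Cn (true,false).
rewrite /kappa2le /chi1 /chi2; nra.
Qed.

Definition e00 : cell -> R := fun j => (j == (false,false))%:R.
Definition thq q : LCparam R := (fun i : bool => (i%:R : R), fun i : bool => if i then q else e00).

Lemma thq_le q : is_prob q -> Theta2le (thq q).
Proof.
move=> Hq; split; first split.
- split; first by move=> i; case: i => /=; rewrite ?ler01.
  by rewrite sum_bool /=; lra.
- case => //=; split; first by move=> j; rewrite /e00 ler0n.
  by rewrite sum_cell /e00 /=; lra.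
by rewrite /chi1 /chi2 /= /e00 /=.
Qed.

Lemma mu_thq q j : mu (thq q) j = q j.
Proof. by rewrite /mu sum_bool /= mul1r mul0r addr0. Qed.

Lemma kappa2le_thq q : kappa2le (thq q) = kappaM q.
Proof. rewrite /kappa2le /chi1 /chi2 /kappaM /=; ring. Qed.

Lemma kappa2_thq q : is_prob q -> kappa2 (thq q) = kappaM q.
Proof.
move=> Hq; rewrite kappa2_mu; last by case: (@thq_le q Hq).
by rewrite /kappaM !mu_thq.
Qed.
End H.
Unset Implicit Arguments.
Section P.
Variable R : realType.
Implicit Types (p q : cell -> R).

Definition e01 : cell -> R := fun j => (j == (false,true))%:R.
Definition qx q0 (x : R) : cell -> R := fun j => q0 j * x + e01 j * (1 - x).

Lemma poly_ident n q0 (A B : pred (sample n)) (c : R) : 0 < c ->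
  (forall x, 0 < x < c -> Pr (qx q0 x) A = Pr (qx q0 x) B) -> Pr q0 A = Pr q0 B.
Proof.
move=> c0 H.
pose Q (j : cell) : {poly R} := (q0 j)%:P * 'X + (e01 j)%:P * (1 - 'X).
pose T (k : sample n) : {poly R} := (n`!)%:R%:P *
  \prod_(j : cell) (Q j ^+ val k j * (((val k j)`!)%:R^-1)%:P).
pose P := \sum_(k | A k) T k - \sum_(k | B k) T k.
have HP x : P.[x] = Pr (qx q0 x) A - Pr (qx q0 x) B.
  rewrite /P hornerD hornerN !horner_sum /Pr; congr (_ - _);
  apply: eq_bigr => k _; rewrite /T /mult_pmf hornerCM horner_prod; congr (_ * _);
  apply: eq_bigr => j _; rewrite hornerM horner_exp hornerC /Q /qx !hornerE //.
have P0 : P = 0.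
  apply/eqP; apply: contraT => nz.
  have := @max_poly_roots _ P [seq c / (i.+2)%:R | i <- iota 0 (size P)] nz.
  rewrite size_map size_iota ltnn; apply.
    apply/allP => y /mapP [i _ ->]; rewrite /root HP H ?subrr //.
    by rewrite divr_gt0 ?ltr0n //= ltr_pdivrMr ?ltr0n // ltr_pMr // ltr1n.
  rewrite map_inj_uniq ?iota_uniq //.
  have cne0 : c != 0 by rewrite gt_eqF.
  move=> i j /(mulfI cne0) /invr_inj /eqP; by rewrite eqr_nat !eqSS => /eqP.
have := HP 1; rewrite P0 horner0 => /eqP; rewrite eq_sym subr_eq0 => /eqP E.
have e j : qx q0 1 j = q0 j by rewrite /qx mulr1 subrr mulr0 addr0.
by rewrite -(@Pr_ext _ _ _ _ A e) E (@Pr_ext _ _ _ _ B e).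
Qed.
End P.
Set Implicit Arguments.
Section T.
Variable R : realType.
Variable n : nat.
Implicit Types (p q : cell -> R) (L La Lb : sample n -> \bar R).

Lemma lcbM_2 beta L : is_lcb (@ThetaM R) (@lawM R) (@kappaM R) beta L ->
  is_lcb (@Theta2 R) (@mu R) (@kappa2 R) beta L.
Proof. move=> H th T2; rewrite kappa2_mu //. exact: (H _ (mu_prob T2)). Qed.

Lemma lcb2_M beta L : is_lcb (@Theta2 R) (@mu R) (@kappa2 R) beta L ->
  is_lcb (@ThetaM R) (@lawM R) (@kappaM R) beta L.
Proof.
move=> H q Hq; have [T2 _] := @thq_le R q Hq.
have := H _ T2; rewrite (@kappa2_thq R q Hq) => h.
by rewrite /lawM -(@Pr_ext _ _ _ _ _ (@mu_thq R q)).
Qed.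

Lemma lcb2_2le beta L : is_lcb (@Theta2 R) (@mu R) (@kappa2 R) beta L ->
  is_lcb (@Theta2le R) (@mu R) (@kappa2le R) beta L.
Proof.
move=> H th Th; have [T2 _] := Th.
apply: le_trans (H _ T2) _; apply: Pr_le => [j|k].
  by case: (mu_prob T2).
rewrite /= => h; apply: le_trans h _; rewrite lee_fin; exact: kappa2le_ge.
Qed.

Lemma lcb2le_M beta L : is_lcb (@Theta2le R) (@mu R) (@kappa2le R) beta L ->
  is_lcb (@ThetaM R) (@lawM R) (@kappaM R) beta L.
Proof.
move=> H q Hq; have := H _ (@thq_le R q Hq); rewrite kappa2le_thq => h.
by rewrite /lawM -(@Pr_ext _ _ _ _ _ (@mu_thq R q)).
Qed.

Lemma w2le_M La Lb : worse (@Theta2le R) (@mu R) (@kappa2le R) La Lb ->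
  worse (@ThetaM R) (@lawM R) (@kappaM R) La Lb.
Proof.
move=> H q Hq s hs; have := H _ (@thq_le R q Hq) s; rewrite kappa2le_thq => /(_ hs).
by rewrite /lawM !(@Pr_ext _ _ _ _ _ (@mu_thq R q)).
Qed.

Lemma wM_2 La Lb : worse (@ThetaM R) (@lawM R) (@kappaM R) La Lb ->
  worse (@Theta2 R) (@mu R) (@kappa2 R) La Lb.
Proof. move=> H th T2 s; rewrite kappa2_mu // => hs; exact: H _ (mu_prob T2) s hs. Qed.

Lemma w2_M La Lb : worse (@Theta2 R) (@mu R) (@kappa2 R) La Lb ->
  worse (@ThetaM R) (@lawM R) (@kappaM R) La Lb.
Proof.
move=> H q Hq s hs; have [T2 _] := @thq_le R q Hq.
have := H _ T2 s; rewrite (@kappa2_thq R q Hq) => /(_ hs).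
by rewrite /lawM !(@Pr_ext _ _ _ _ _ (@mu_thq R q)).
Qed.

Lemma swM_2 La Lb : strictly_worse (@ThetaM R) (@lawM R) (@kappaM R) La Lb ->
  strictly_worse (@Theta2 R) (@mu R) (@kappa2 R) La Lb.
Proof.
move=> [W [q [Hq [s [hs h]]]]]; split; first exact: wM_2.
have [T2 _] := @thq_le R q Hq.
exists (thq R q); split => //; exists s; rewrite (@kappa2_thq R q Hq); split => //.
by rewrite !(@Pr_ext _ _ _ _ _ (@mu_thq R q)).
Qed.

Lemma sw2_M La Lb : strictly_worse (@Theta2 R) (@mu R) (@kappa2 R) La Lb ->
  strictly_worse (@ThetaM R) (@lawM R) (@kappaM R) La Lb.
Proof.
move=> [W [th [T2 [s [hs h]]]]]; split; first exact: w2_M.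
exists (mu th); split; first exact: mu_prob.
by exists s; rewrite -kappa2_mu.
Qed.

Lemma qxP q0 x : is_prob q0 -> 0 <= x <= 1 -> is_prob (qx R q0 x).
Proof.
move=> [H S] /andP[x0 x1]; split.
  move=> j; rewrite /qx addr_ge0 // mulr_ge0 // ?subr_ge0 // /e01 ler0n.
rewrite sum_cell in S; rewrite sum_cell /qx /e01 /=.
rewrite ?mulr0n ?mulr1n.
transitivity (x * (q0 (true, true) + q0 (true, false) + (q0 (false, true) + q0 (false, false))) + (1 - x)); first ring.
by rewrite S; ring.
Qed.

Lemma eqCpoly q0 s (A B : pred (sample n)) : is_prob q0 -> (s < 1%:E)%E ->
  (forall q, is_prob q -> (s < (kappaM q)%:E)%E -> Pr q A = Pr q B) ->
  Pr q0 A = Pr q0 B.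
Proof.
move=> Hq; case: s => [r| |] s1 H //.
  rewrite lte_fin in s1.
  apply: (@poly_ident R n q0 A B (Num.min 1 ((1 - r) / 2))).
    by rewrite lt_min ltr01 /=; lra.
  move=> x /andP[x0]; rewrite lt_min => /andP[x1 x2].
  apply: H; first by apply: qxP => //; rewrite (ltW x0) ltW.
  rewrite lte_fin /kappaM /qx /e01 /=.
  have a := (proj1 Hq) (false,true); have b := @prob_le1 R q0 (true,false) Hq.
  nra.
apply: (@poly_ident R n q0 A B 1) => // x /andP[x0 x1].
apply: H; last exact: ltNyr.
by apply: qxP => //; rewrite !ltW.
Qed.
End T.
Unset Implicit Arguments.
Theorem theorem1 (R : realType) (beta : R) (n : nat) (D : sample n -> R) :
  0 <= beta <= 1 -> (0 < n)%N -> (forall k, -1 <= D k <= 1) ->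
  let L := fun k => (D k)%:E in
  (* A *)
  ((is_lcb (@ThetaM R) (@lawM R) (@kappaM R) beta L <->
    is_lcb (@Theta2 R) (@mu R) (@kappa2 R) beta L) /\
   (is_lcb (@Theta2 R) (@mu R) (@kappa2 R) beta L <->
    is_lcb (@Theta2le R) (@mu R) (@kappa2le R) beta L)) /\
  (* B *)
  (forall Dt : sample n -> R, (forall k, -1 <= Dt k <= 1) ->
   let Lt := fun k => (Dt k)%:E in
   is_lcb (@ThetaM R) (@lawM R) (@kappaM R) beta L ->
   is_lcb (@Theta2 R) (@mu R) (@kappa2 R) beta L ->
   is_lcb (@Theta2le R) (@mu R) (@kappa2le R) beta L ->
   is_lcb (@ThetaM R) (@lawM R) (@kappaM R) beta Lt ->
   is_lcb (@Theta2 R) (@mu R) (@kappa2 R) beta Lt ->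
   is_lcb (@Theta2le R) (@mu R) (@kappa2le R) beta Lt ->
   worse (@Theta2le R) (@mu R) (@kappa2le R) Lt L ->
   worse (@Theta2 R) (@mu R) (@kappa2 R) Lt L /\
   worse (@ThetaM R) (@lawM R) (@kappaM R) Lt L) /\
  (* C *)
  (admissible (@ThetaM R) (@lawM R) (@kappaM R) beta L \/
   admissible (@Theta2 R) (@mu R) (@kappa2 R) beta L ->
   admissible (@ThetaM R) (@lawM R) (@kappaM R) beta L /\
   admissible (@Theta2 R) (@mu R) (@kappa2 R) beta L /\
   admissible (@Theta2le R) (@mu R) (@kappa2le R) beta L).
Proof.
move=> _ _ _ L; split; [split; split|split].
- exact: lcbM_2.
- exact: lcb2_M.
- exact: lcb2_2le.
- by move=> h; apply: lcbM_2; apply: lcb2le_M.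
- move=> Dt _ Lt _ _ _ _ _ _ W; have WM := w2le_M W.
  by split; [apply: wM_2|].
move=> H.
have HM : admissible (@ThetaM R) (@lawM R) (@kappaM R) beta L.
  case: H => // [[l2 nsw]]; split; first exact: lcb2_M.
  by move=> L' l' sw; apply: (nsw L' (lcbM_2 l')); apply: swM_2.
have H2 : admissible (@Theta2 R) (@mu R) (@kappa2 R) beta L.
  case: HM => lM nsw; split; first exact: lcbM_2.
  by move=> L' l' sw; apply: (nsw L' (lcb2_M l')); apply: sw2_M.
split => //; split => //.
case: HM => lM nsw; split; first by apply: lcb2_2le; apply: lcbM_2.
move=> L' l' [W [t [Tt [s [hs h]]]]].
have WM := w2le_M W.
have lM' := lcb2le_M l'.
have E : forall q, is_prob q -> (s < (kappaM q)%:E)%E ->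
    Pr q [pred k | (s <= L k)%E] = Pr q [pred k | (s <= L' k)%E].
  move=> q Hq hq; apply/eqP; rewrite eq_le (WM q Hq s hq) /=.
  rewrite leNgt; apply/negP => lt; apply: (nsw L' lM'); split => //.
  by exists q; split => //; exists s; split.
have [T2 _] := Tt.
have s1 : (s < 1%:E)%E.
  by apply: (lt_le_trans hs); rewrite lee_fin; apply: kappa2le_le1.
have := @eqCpoly R n (mu t) s _ _ (mu_prob T2) s1 E.
by move=> e; rewrite e ltxx in h.
Qed.
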